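(* Let $\Bbbk$ be a field, let $\mathrm{Var}$ be a variety of $\Bbbk$-algebras with one binary product defined by a set of polylinear identities. Let $X$ be a set, $\dot X=\{\dot x\mid x\in X\}$ a disjoint copy of $X$, $F=\mathrm{Var}\langle X\cup\dot X\rangle$ the free $\mathrm{Var}$-algebra on $X\cup\dot X$, and $\varphi:F\to F$ the algebra homomorphism with $\varphi(x)=\varphi(\dot x)=x$ for $x\in X$. Equip $F$ with the operations $f\vdash g=\varphi(f)g$, $f\dashv g=f\varphi(g)$, $f\perp g=fg$, obtaining the system $F^{(3)}$. Then the subalgebra $V$ of $F^{(3)}$ generated by $\dot X$ (i.e. the smallest subspace containing $\dot X$ and closed under $\vdash,\dashv,\perp$) coincides with the subspace $W$ of $F$ spanned by all monomials $u$ with $\deg_{\dot X}u>0$.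
   Context: Monomials of $F$ are the images of nonassociative words (bracketed products) in the alphabet $X\cup\dot X$; since the defining identities of $\mathrm{Var}$ are polylinear, $F$ is graded by degree in each letter, and $\deg_{\dot X}u$ denotes the total number of occurrences of letters from $\dot X$ in the monomial $u$. *)

(* Defs.v *)
From HB Require Import structures.
From mathcomp Require Import all_boot all_order all_algebra.
Set Implicit Arguments. Unset Strict Implicit. Unset Printing Implicit Defensive.
Import GRing.Theory.
Local Open Scope ring_scope.

Inductive word (T : Type) : Type :=
| Leaf of T
| Node of word T & word T.
Arguments Leaf {T} _.
Arguments Node {T} _ _.

Fixpoint leaves (T : Type) (w : word T) : seq T :=
  match w with Leaf t => [:: t] | Node u v => leaves u ++ leaves v end.

(* number of letters of the word lying in the second copy (inr = dotted letters) *)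
Fixpoint deg_dot (X : Type) (w : word (X + X)) : nat :=
  match w with
  | Leaf (inl _) => 0%N
  | Leaf (inr _) => 1%N
  | Node u v => (deg_dot u + deg_dot v)%N
  end.

Record naalg (k : fieldType) := NAAlg {
  na_carrier :> lmodType k;
  na_mul : na_carrier -> na_carrier -> na_carrier;
  na_mulDl : forall (c : k) x y z, na_mul (c *: x + y) z = c *: na_mul x z + na_mul y z;
  na_mulDr : forall (c : k) x y z, na_mul z (c *: x + y) = c *: na_mul z x + na_mul z y
}.
Arguments na_mul {k} _ _ _.

Fixpoint eval_word (k : fieldType) (A : naalg k) (T : Type) (a : T -> A) (w : word T) : A :=
  match w with
  | Leaf t => a t
  | Node u v => na_mul A (eval_word a u) (eval_word a v)
  end.

(* A nonassociative polynomial in the variables 'I_n: finite linear combination of words. *)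
Definition napoly (k : fieldType) (n : nat) := seq (k * word 'I_n).

Definition polylinear (k : fieldType) (n : nat) (p : napoly k n) : Prop :=
  all (fun m : k * word 'I_n => perm_eq (leaves m.2) (enum 'I_n)) p.

Definition eval_poly (k : fieldType) (A : naalg k) (n : nat) (p : napoly k n)
  (a : 'I_n -> A) : A :=
  \sum_(m <- p) m.1 *: eval_word a m.2.

(* A set of identities: Ids n p means p (in n variables) is one of the defining identities. *)
Definition identities (k : fieldType) := forall n : nat, napoly k n -> Prop.

Definition in_var (k : fieldType) (Ids : identities k) (A : naalg k) : Prop :=
  forall n (p : napoly k n), Ids n p -> forall a : 'I_n -> A, eval_poly p a = 0.

Definition is_hom (k : fieldType) (A B : naalg k) (f : A -> B) : Prop :=
  (forall (c : k) x y, f (c *: x + y) = c *: f x + f y) /\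
  (forall x y, f (na_mul A x y) = na_mul B (f x) (f y)).

Definition is_free_var (k : fieldType) (Ids : identities k) (S : Type)
  (A : naalg k) (iota : S -> A) : Prop :=
  in_var Ids A /\
  forall (B : naalg k), in_var Ids B -> forall f : S -> B,
    exists g : A -> B, [/\ is_hom g, (forall s, g (iota s) = f s) &
      forall g' : A -> B, is_hom g' -> (forall s, g' (iota s) = f s) ->
        forall x, g' x = g x].

Inductive span_of (k : fieldType) (V : lmodType k) (S : V -> Prop) : V -> Prop :=
| span0 : span_of S 0
| spanS s : S s -> span_of S s
| spanD a b : span_of S a -> span_of S b -> span_of S (a + b)
| spanZ (c : k) a : span_of S a -> span_of S (c *: a).

(* subalgebra of F^(3) generated by G: smallest subspace containing G closed under
   f |- g = phi(f) g,  f -| g = f phi(g),  f _|_ g = f g *)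
Inductive gen3 (k : fieldType) (A : naalg k) (phi : A -> A) (G : A -> Prop) : A -> Prop :=
| gen3G g : G g -> gen3 phi G g
| gen30 : gen3 phi G 0
| gen3D a b : gen3 phi G a -> gen3 phi G b -> gen3 phi G (a + b)
| gen3Z (c : k) a : gen3 phi G a -> gen3 phi G (c *: a)
| gen3L a b : gen3 phi G a -> gen3 phi G b -> gen3 phi G (na_mul A (phi a) b)
| gen3R a b : gen3 phi G a -> gen3 phi G b -> gen3 phi G (na_mul A a (phi b))
| gen3P a b : gen3 phi G a -> gen3 phi G b -> gen3 phi G (na_mul A a b).

(* Main.v *)
Require Import Defs.
From mathcomp Require Import all_boot all_order all_algebra.
Import GRing.Theory.

Fixpoint wmap (T U : Type) (f : T -> U) (w : word T) : word U :=
  match w with Leaf t => Leaf (f t) | Node u v => Node (wmap T U f u) (wmap T U f v) end.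
Arguments wmap {T U} f w.

Lemma eq_eval (k : fieldType) (A : naalg k) (T : Type) (a b : T -> A) u :
  (forall t, a t = b t) -> eval_word a u = eval_word b u.
Proof. by move=> H; elim: u => [t|u IHu v IHv] //=; rewrite IHu IHv. Qed.

Definition projs {X : Type} (s : X + X) : X := match s with inl x => x | inr x => x end.

Lemma eval_wmap (k : fieldType) (A : naalg k) (T U : Type) (a : U -> A) (f : T -> U) u :
  eval_word a (wmap f u) = eval_word (fun t => a (f t)) u.
Proof. by elim: u => //= u IHu v IHv; rewrite IHu IHv. Qed.

Lemma deg0_wmap (X : Type) (u : word (X + X)) :
  deg_dot u = 0%N -> wmap (fun s => inl (projs s)) u = u.
Proof.
elim: u => [[x|x]|u IHu v IHv] //= /eqP; rewrite addn_eq0 => /andP[/eqP H1 /eqP H2].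
by rewrite IHu // IHv.
Qed.

Lemma deg_wmap_inl (X : Type) (u : word (X + X)) :
  deg_dot (wmap (fun s => inl (projs s)) u) = 0%N.
Proof. by elim: u => [[x|x]|u IHu v IHv] //=; rewrite IHu IHv. Qed.

Section Bil.
Variables (k : fieldType) (A : naalg k).
Local Open Scope ring_scope.

Lemma dbl0 (x : A) : x = x + x -> x = 0.
Proof. by move=> H; have := addrK x x; rewrite -H subrr => <-. Qed.

Lemma mul0l (z : A) : na_mul A 0 z = 0.
Proof.
have := na_mulDl 1 (0 : A) 0 z; rewrite !scale1r addr0 => /dbl0 //.
Qed.

Lemma mul0r (z : A) : na_mul A z 0 = 0.
Proof.
have := na_mulDr 1 (0 : A) 0 z; rewrite !scale1r addr0 => /dbl0 //.
Qed.

Lemma span_mul (P Q R : A -> Prop) a b :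
  span_of P a -> span_of Q b ->
  (forall x y, P x -> Q y -> span_of R (na_mul A x y)) ->
  span_of R (na_mul A a b).
Proof.
move=> Ha Hb H.
elim: Ha => [|x Px|x y _ IHx _ IHy|c x _ IHx].
- by rewrite mul0l; constructor.
- elim: Hb => [|y Qy|y y' _ IHy _ IHy'|c y _ IHy].
  + by rewrite mul0r; constructor.
  + exact: H.
  + by have := na_mulDr 1 y y' x; rewrite !scale1r => ->; apply: spanD.
  + by have := na_mulDr c y 0 x; rewrite addr0 mul0r addr0 => ->; apply: spanZ.
- by have := na_mulDl 1 x y b; rewrite !scale1r => ->; apply: spanD.
- by have := na_mulDl c x 0 b; rewrite addr0 mul0l addr0 => ->; apply: spanZ.
Qed.

Lemma span_hom (phi : A -> A) (P Q : A -> Prop) a :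
  is_hom phi -> span_of P a -> (forall x, P x -> Q (phi x)) -> span_of Q (phi a).
Proof.
move=> [Hl _] Ha H.
have phi0 : phi 0 = 0.
  have := Hl 1 0 0; rewrite !scale1r addr0 => /dbl0 //.
elim: Ha => [|x Px|x y _ IHx _ IHy|c x _ IHx].
- by rewrite phi0; constructor.
- by apply: spanS; apply: H.
- by have := Hl 1 x y; rewrite !scale1r => ->; apply: spanD.
- by have := Hl c x 0; rewrite !addr0 phi0 addr0 => ->; apply: spanZ.
Qed.

Lemma span_weak (P Q : A -> Prop) a :
  span_of P a -> (forall x, P x -> Q x) -> span_of Q a.
Proof.
move=> Ha H; elim: Ha => *; [exact: span0|apply: spanS; auto|exact: spanD|exact: spanZ].
Qed.

End Bil.

(* X + X : inl x = x, inr x = dotted x *)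
Theorem lemma3p2 (k : fieldType) (Ids : identities k)
  (Ids_polylin : forall n (p : napoly k n), Ids n p -> polylinear p)
  (X : Type) (F : naalg k) (iota : X + X -> F)
  (Ffree : is_free_var Ids iota)
  (phi : F -> F) (phi_hom : is_hom phi)
  (phi_x : forall x, phi (iota (inl x)) = iota (inl x))
  (phi_xdot : forall x, phi (iota (inr x)) = iota (inl x)) :
  forall f : F,
    gen3 phi (fun g => exists x, g = iota (inr x)) f <->
    span_of (fun g => exists u : word (X + X), (0 < deg_dot u)%N /\ g = eval_word iota u) f.
Proof.
have phiw : forall u, phi (eval_word iota u) =
    eval_word iota (wmap (fun s => inl (projs s)) u).
  elim=> [[x|x]|u IHu v IHv] /=; rewrite ?phi_x ?phi_xdot //.
  by rewrite phi_hom.2 IHu IHv.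
set G := (fun g => exists x, g = iota (inr x)).
set W := (fun g => exists u : word (X + X), (0 < deg_dot u)%N /\ g = eval_word iota u).
set M := (fun g => exists u : word (X + X), g = eval_word iota u).
have WM : forall a, span_of W a -> span_of M a.
  move=> a Ha; apply: (@span_weak _ _ W M a Ha) => x [u [_ ->]]; by exists u.
have phiM : forall a, span_of M a -> span_of M (phi a).
  move=> a Ha; apply: (@span_hom _ _ phi M M a phi_hom Ha) => x [u ->].
  by rewrite phiw; eexists.
have alldot : forall u : word (X + X),
    gen3 phi G (eval_word iota (wmap (fun s => inr (projs s)) u)).
  elim=> [s|u IHu v IHv] /=; first by apply: gen3G; eexists.
  exact: gen3P.
have phidot : forall u : word (X + X), deg_dot u = 0%N ->
    phi (eval_word iota (wmap (fun s => inr (projs s)) u)) = eval_word iota u.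
  move=> u Hu; rewrite phiw eval_wmap.
  rewrite -[in RHS](@deg0_wmap _ u Hu) eval_wmap.
  rewrite [RHS]eval_wmap; by apply: eq_eval => -[].
move=> f; split.
- elim=> [g [x ->]| |a b _ Ha _ Hb|c a _ Ha|a b _ Ha _ Hb|a b _ Ha _ Hb|a b _ Ha _ Hb].
  + by apply: spanS; exists (Leaf (inr x)).
  + exact: span0.
  + exact: spanD.
  + exact: spanZ.
  + apply: (@span_mul k F M W W (phi a) b (phiM _ (WM _ Ha)) Hb) => x y [u ->] [v [Hv ->]].
    by apply: spanS; exists (Node u v); split => //=; rewrite addn_gt0 Hv orbT.
  + apply: (@span_mul k F W M W a (phi b) Ha (phiM _ (WM _ Hb))) => x y [u [Hu ->]] [v ->].
    by apply: spanS; exists (Node u v); split => //=; rewrite addn_gt0 Hu.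
  + apply: (@span_mul k F W W W a b Ha Hb) => x y [u [Hu ->]] [v [Hv ->]].
    by apply: spanS; exists (Node u v); split => //=; rewrite addn_gt0 Hu.
- elim=> [|g [u [Hu ->]]|a b _ Ha _ Hb|c a _ Ha].
  + exact: gen30.
  + elim: u Hu => [[x|x]|u IHu v IHv] //=.
      by move=> _; apply: gen3G; exists x.
    rewrite addn_gt0.
    case: (posnP (deg_dot u)) => Hu; case: (posnP (deg_dot v)) => Hv //= _.
    * by rewrite -(phidot u Hu); apply: gen3L; [exact: alldot|exact: IHv].
    * by rewrite -(phidot v Hv); apply: gen3R; [exact: IHu|exact: alldot].
    * exact: gen3P (IHu Hu) (IHv Hv).
  + exact: gen3D.
  + exact: gen3Z.
Qed.
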